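(* Let $q,m\ge0$, $k\ge1$ be integers, $\zeta$ a root of unity with $\zeta^{3^k-1}=1$, and let $(c,a)\in Z(q,m,\zeta)$ be such that $Q_{c,a}=\zeta P^m_{c,a}+(1-\zeta)\frac c2$ commutes with $P^k_{c,a}$. Then $$Q_{c,a}\big(\mathrm{Crit}(P^{k+m}_{c,a})\big)=Q_{c,a}\big(\mathrm{Crit}(P^m_{c,a})\big)\cup\mathrm{Crit}(P^k_{c,a}).$$
   Context: $P_{c,a}(z)=\frac13z^3-\frac c2z^2+a^3$, $(c,a)\in\mathbb{C}^2$, with critical points $c_0=0$, $c_1=c$; $\mathrm{Crit}(R)$ denotes the set of critical points of a polynomial $R$ (with $\mathrm{Crit}(P^0)=\emptyset$). For integers $q,m\ge0$ and a root of unity $\zeta$, $Z(q,m,\zeta)$ is the set of $(c,a)$ such that $Q_{c,a}:=\zeta P^m_{c,a}+(1-\zeta)\frac c2$ commutes with all iterates $P^j_{c,a}$ ($j\ge1$) with $\zeta^{3^j}=\zeta$, and either $Q_{c,a}(P^q_{c,a}(c_0))=P^q_{c,a}(c_1)$ or $Q_{c,a}(P^q_{c,a}(c_1))=P^q_{c,a}(c_0)$. *)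

(* Defs.v *)
From HB Require Import structures.
From mathcomp Require Import all_boot all_order all_algebra.
From mathcomp Require Import complex.
From mathcomp Require Import boolp classical_sets reals.
Set Implicit Arguments. Unset Strict Implicit. Unset Printing Implicit Defensive.
Import Order.TTheory GRing.Theory Num.Theory.
Local Open Scope ring_scope.
Local Open Scope complex_scope.

Definition Pca (R : realType) (c a : R[i]) : {poly R[i]} :=
  3^-1 *: 'X^3 - (c / 2) *: 'X^2 + (a ^+ 3)%:P.

Definition Piter (R : realType) (c a : R[i]) (n : nat) : {poly R[i]} :=
  iter n (fun p => Pca c a \Po p) 'X.

Definition Qpoly (R : realType) (zeta : R[i]) (m : nat) (c a : R[i]) : {poly R[i]} :=
  zeta *: Piter c a m + ((1 - zeta) * (c / 2))%:P.

Definition Crit (R : realType) (p : {poly R[i]}) : set R[i] :=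
  [set z | p^`().[z] = 0].

Definition pcommute (R : realType) (p r : {poly R[i]}) : Prop :=
  p \Po r = r \Po p.

Definition rootunity (R : realType) (z : R[i]) : Prop :=
  exists n : nat, (0 < n)%N /\ z ^+ n = 1.

(* (c,a) \in Z(q,m,zeta); critical points c_0 = 0, c_1 = c *)
Definition inZ (R : realType) (q m : nat) (zeta c a : R[i]) : Prop :=
  (forall j : nat, (1 <= j)%N -> zeta ^+ (3 ^ j) = zeta ->
      pcommute (Qpoly zeta m c a) (Piter c a j)) /\
  ((Qpoly zeta m c a).[(Piter c a q).[0]] = (Piter c a q).[c] \/
   (Qpoly zeta m c a).[(Piter c a q).[c]] = (Piter c a q).[0]).

(* Main.v *)
Require Import Defs.
From HB Require Import structures.
From mathcomp Require Import all_boot all_order all_algebra.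
From mathcomp Require Import complex.
From mathcomp Require Import boolp classical_sets reals.
Import Order.TTheory GRing.Theory Num.Theory.
Local Open Scope ring_scope.
Local Open Scope classical_set_scope.

Lemma poly_all0 (R : realType) (h : {poly R[i]}) :
  (forall x, h.[x] = 0) -> h = 0.
Proof.
move=> H; apply/eqP; apply/negPn/negP => hn0.
have hall : all (root h) [seq (j%:R : R[i]) | j <- iota 0 (size h)].
  by apply/allP => x _; apply/eqP/H.
have hu : uniq [seq (j%:R : R[i]) | j <- iota 0 (size h)].
  by rewrite map_inj_uniq ?iota_uniq // => x y /eqP; rewrite eqr_nat => /eqP.
by have := max_poly_roots hn0 hall hu; rewrite size_map size_iota ltnn.
Qed.

Lemma Piter_add (R : realType) (c a : R[i]) (i j : nat) :
  Piter c a (i + j) = Piter c a i \Po Piter c a j.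
Proof.
elim: i => [|i IH]; first by rewrite add0n /Piter /= comp_polyX.
by rewrite addSn /Piter !iterS -/(Piter c a (i + j)) IH comp_polyA.
Qed.

Lemma Pca_surj (R : realType) (c a u : R[i]) : exists v, (Pca c a).[v] = u.
Proof.
have : size (Pca c a - u%:P) != 1%N.
  apply/negP => /eqP hs.
  have : (Pca c a - u%:P)`_3 = 0 by rewrite nth_default // hs.
  rewrite /Pca !coefE /= mulr1 mulr0 !subr0 addr0.
  by apply/eqP; rewrite invr_eq0 pnatr_eq0.
case/closed_rootP => v; rewrite /root hornerD hornerN hornerC subr_eq0 => /eqP hv.
by exists v.
Qed.

Lemma Piter_surj (R : realType) (c a u : R[i]) n : exists z, (Piter c a n).[z] = u.
Proof.
elim: n u => [|n IH] u; first by exists u; rewrite /Piter /= hornerX.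
have [v hv] := Pca_surj _ c a u; have [z hz] := IH v.
by exists z; rewrite /Piter iterS -/(Piter c a n) horner_comp hz.
Qed.

Theorem lemma7p2 (R : realType) (q m k : nat) (zeta c a : R[i])
  (hk : (1 <= k)%N)
  (hzeta : rootunity zeta)
  (hzk : (zeta ^+ (3 ^ k - 1)%N = 1)%R)
  (hZ : inZ q m zeta c a)
  (hcomm : pcommute (Qpoly zeta m c a) (Piter c a k)) :
  (fun z => (Qpoly zeta m c a).[z]) @` Crit (Piter c a (k + m)) =
  ((fun z => (Qpoly zeta m c a).[z]) @` Crit (Piter c a m)) `|` Crit (Piter c a k).
Proof.
set Pm := Piter c a m; set Pk := Piter c a k.
set Al : {poly R[i]} := zeta *: 'X + ((1 - zeta) * (c / 2))%:P.
have hQ : Qpoly zeta m c a = Al \Po Pm.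
  by rewrite /Qpoly /Al comp_polyD comp_polyZ comp_polyX comp_polyC.
have hAl x : Al.[x] = zeta * x + (1 - zeta) * (c / 2).
  by rewrite /Al hornerD hornerZ hornerX hornerC.
have hz0 : zeta != 0.
  apply/negP => /eqP z0; move: hzk; rewrite z0 expr0n.
  have -> : (3 ^ k - 1 == 0)%N = false.
    by apply/negbTE; rewrite subn_eq0 -ltnNge (leq_trans _ (leq_pexp2l _ hk)).
  by move/eqP; rewrite eq_sym oner_eq0.
have hkm : Piter c a (k + m) = Pk \Po Pm by rewrite Piter_add.
have hmk : Pk \Po Pm = Pm \Po Pk by rewrite -Piter_add addnC Piter_add.
have hAk : Al \Po Pk = Pk \Po Al.
  apply/eqP; rewrite -subr_eq0; apply/eqP/poly_all0 => y.
  have [z hz] := Piter_surj _ c a y m.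
  move: hcomm; rewrite /pcommute hQ -comp_polyA -hmk comp_polyA.
  rewrite comp_polyA => /(congr1 (fun p => p.[z])).
  rewrite !horner_comp hz => h; rewrite hornerD hornerN !horner_comp; apply/eqP; rewrite subr_eq0; apply/eqP; exact: h.
have hAd : Al^`() = zeta%:P.
  by rewrite /Al derivD derivZ derivX derivC addr0 alg_polyC.
have inv w : Pk^`().[Al.[w]] = Pk^`().[w].
  have := congr1 (fun p => p.[w]) (congr1 (@deriv _) hAk).
  rewrite /= !deriv_comp hAd comp_polyC !hornerM !horner_comp !hornerC mulrC.
  by move/(mulIf hz0).
have hQe z : (Qpoly zeta m c a).[z] = Al.[Pm.[z]] by rewrite hQ horner_comp.
rewrite hkm; apply/seteqP; split => w /=.
  case=> z; rewrite /Crit /= deriv_comp hornerM horner_comp => /eqP.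
  rewrite mulf_eq0 => /orP [] /eqP hc <-.
    by right; rewrite hQe inv.
  by left; exists z.
case.
  case=> z hz <-; exists z => //.
  by move: hz; rewrite /Crit /= deriv_comp hornerM horner_comp => ->; rewrite mulr0.
rewrite /Crit /= => hw.
set u := (w - (1 - zeta) * (c / 2)) / zeta.
have hu : Al.[u] = w by rewrite hAl /u mulrC divfK // subrK.
have [z hz] := Piter_surj _ c a u m.
exists z; last by rewrite hQe -/Pm hz hu.
by rewrite /Crit /= deriv_comp hornerM horner_comp -/Pm hz -inv hu hw mul0r.
Qed.
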